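(* Let $\gamma\in(1,2]$, $\delta>0$. Assume that $f$ is convex and $L$-smooth relative to $d$ on $Q$, that $V$ satisfies the triangular scaling property with scaling factor $\gamma$, and that for every $y\in Q$ the pair $(f_\delta(y),\nabla f_\delta(y))$ is a $(\delta,L)$-oracle of $f$ at $y$. Consider the scheme AccBPGM-2 below with $\theta_k=\frac{\gamma}{k+\gamma}$ for all $k\ge0$, and suppose the constants $L_{k+1}$ satisfy, for every $k\ge0$: $L_{k+2}\ge L_{k+1}$, $L_{k+1}\ge(\theta_{k+1}/\theta_k)^{\gamma}$, $f(x_{k+1})\le g(x_{k+1}|y_k)+L_{k+1}V(x_{k+1},y_k)+\delta$, and $L_{k+1}<2L$. Let $x_*$ be a minimizer of $f$ on $Q$. Then for every $N\ge1$, $$f(x_N)-f(x_* )\le2L\Big(\frac{\gamma}{\gamma+N-1}\Big)^{\gamma}V(x_*,x_0)+\big(2(N-1)L+1\big)\delta.$$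
   Context: Setting. $\mathbb{E}$ is a finite-dimensional real vector space with a norm $\|\cdot\|$ and dual space $\mathbb{E}^*$; $\langle g,x\rangle$ denotes the value of $g\in\mathbb{E}^*$ at $x\in\mathbb{E}$. $Q\subset\mathbb{E}$ is a closed convex set. $f:Q\to\mathbb{R}$ is convex and differentiable on an open set containing the relative interior $\mathrm{rint}\,Q$. The prox-function $d:Q\to\mathbb{R}$ is continuously differentiable and $1$-strongly convex with respect to $\|\cdot\|$. The Bregman divergence is $V(x,y)=d(x)-d(y)-\langle\nabla d(y),x-y\rangle$. All minimization subproblems appearing in the algorithms are assumed to have minimizers. Relative smoothness: $f$ is $L$-smooth relative to $d$ on $Q$ if $f(y)\le f(x)+\langle\nabla f(x),y-x\rangle+LV(y,x)$ for all $x\in\mathrm{rint}\,Q$, $y\in Q$. Triangular scaling property with factor $\gamma>0$: $V((1-\theta)x+\theta z,(1-\theta)x+\theta\tilde z)\le\theta^{\gamma}V(z,\tilde z)$ for all $x,z,\tilde z\in Q$ and all $\theta\in[0,1]$. $(\delta,L)$-oracle: a pair $(f_\delta(y),\nabla f_\delta(y))\in\mathbb{R}\times\mathbb{E}^*$ is a $(\delta,L)$-oracle of $f$ at $y$ if $0\le f(x)-\big(f_\delta(y)+\langle\nabla f_\delta(y),x-y\rangle\big)\le LV(x,y)+\delta$ for all $x\in Q$. Notation: $g(x|y):=f_\delta(y)+\langle\nabla f_\delta(y),x-y\rangle$. Scheme AccBPGM-2 (adaptive version). Input: $x_0\in\mathrm{rint}\,Q$, $\gamma\in(1,2]$, $\delta>0$.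 Set $z_0=x_0$, $\theta_0=1$. For $k=0,1,2,\dots$: a constant $L_{k+1}>0$ is chosen, and $y_k=(1-\theta_k)x_k+\theta_kz_k$; $z_{k+1}=\arg\min_{z\in Q}\{g(z|y_k)+\theta_k^{\gamma-1}L_{k+1}V(z,z_k)\}$; $x_{k+1}=(1-\theta_k)x_k+\theta_kz_{k+1}$. *)

(* Defs.v *)
(* E = 'rV[R]_n (finite-dimensional real vector space),
   E^* identified with 'rV[R]_n via the pairing <g,x> = \sum_i g_i x_i. *)
From HB Require Import structures.
From mathcomp Require Import all_boot all_order all_algebra.
From mathcomp Require Import all_classical all_reals all_analysis.
Set Implicit Arguments. Unset Strict Implicit. Unset Printing Implicit Defensive.
Import Order.TTheory GRing.Theory Num.Theory.
Import numFieldNormedType.Exports.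
Local Open Scope classical_set_scope.
Local Open Scope ring_scope.

Section Defs.
Variables (R : realType) (n : nat).
Notation E := 'rV[R]_n.

Definition pairing (g x : E) : R := (g *m x^T) 0 0.

Definition is_norm (nrm : E -> R) : Prop :=
  [/\ forall x y, nrm (x + y) <= nrm x + nrm y,
      forall (a : R) x, nrm (a *: x) = `|a| * nrm x
    & forall x, nrm x = 0 -> x = 0].

Definition pc_convex_set (Q : set E) : Prop :=
  forall x y (t : R), Q x -> Q y -> 0 <= t <= 1 -> Q ((1 - t) *: x + t *: y).

Definition pc_convex_fun (Q : set E) (f : E -> R) : Prop :=
  forall x y (t : R), Q x -> Q y -> 0 <= t <= 1 ->
    f ((1 - t) *: x + t *: y) <= (1 - t) * f x + t * f y.

Definition pc_strongly_convex1 (nrm : E -> R) (Q : set E) (d : E -> R) : Prop :=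
  forall x y (t : R), Q x -> Q y -> 0 <= t <= 1 ->
    d ((1 - t) *: x + t *: y) <=
      (1 - t) * d x + t * d y - t * (1 - t) / 2 * (nrm (x - y)) ^+ 2.

Definition aff_hull (Q : set E) : set E :=
  [set x | exists s : seq (R * E),
     [/\ forall p, p \in s -> Q p.2,
         \sum_(p <- s) p.1 = 1
       & x = \sum_(p <- s) p.1 *: p.2]].

Definition rint (Q : set E) : set E :=
  [set x | Q x /\ exists2 e : R, 0 < e & forall y, aff_hull Q y -> ball x e y -> Q y].

Definition bregman (d : E -> R) (x y : E) : R := d x - d y - 'd d y (x - y).

End Defs.

(* Main.v *)
Require Import Defs.
From HB Require Import structures.
From mathcomp Require Import all_boot all_order all_algebra.
From mathcomp Require Import all_classical all_reals all_analysis.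
From mathcomp Require Import ring lra.
Import Order.TTheory GRing.Theory Num.Theory.
Import numFieldNormedType.Exports.
Local Open Scope classical_set_scope.
Local Open Scope ring_scope.
Set Implicit Arguments. Unset Strict Implicit.

Section H.
Variables (R : realType) (n : nat).
Notation E := 'rV[R]_n.

Lemma bern (s g : R) : 0 <= s -> 1 < g -> 1 - g * (1 - s) <= s `^ g.
Proof.
move=> s0 g1.
have g0 : 0 < g by lra.
have q0 : 0 < g / (g - 1) by rewrite divr_gt0 // subr_gt0.
have := @conjugate_powR R s 1 g (g / (g - 1)) s0 ler01 g0 q0.
rewrite powR1 mulr1 invf_div.
have gn0 : g != 0 by rewrite gt_eqF.
have g1n0 : g - 1 != 0 by rewrite gt_eqF // subr_gt0.
have -> : g^-1 + (g - 1) / g = 1 by field.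
move=> /(_ erefl) H.
have : g * s <= s `^ g + (g - 1).
  have -> : s `^ g + (g - 1) = g * (s `^ g / g + 1 / (g / (g - 1))).
    by field; rewrite g1n0 gn0.
  by rewrite ler_pM2l // div1r invf_div; rewrite mul1r in H.
lra.
Qed.

Lemma dir_le (d : E -> R) u v B : differentiable d u ->
  (forall t : R, 0 < t <= 1 -> d (u + t *: v) - d u <= t * B) -> 'd d u v <= B.
Proof.
move=> Hd Hb; rewrite -deriveE //.
have := @diff_derivable _ _ _ _ _ v Hd; rewrite /derivable => /cvg_ex[l Hl].
have Hl' := cvg_dnbhs_at_right Hl.
rewrite /derive (cvg_lim _ Hl) //.
apply: (cvgr_to_le Hl').
near=> t.
have t0 : 0 < t by near: t; exact: nbhs_right_gt.
have t1 : t <= 1 by near: t; apply: nbhs_right_le; exact: ltr01.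
rewrite /= (addrC (t *: v)) -[t^-1 *: _]/(t^-1 * _).
have := Hb t; rewrite t0 t1 => /(_ isT) h.
by rewrite -(ler_pM2l t0) mulrA mulfV ?gt_eqF // mul1r.
Unshelve. all: by end_near.
Qed.
Lemma pairingD (p a b : E) : pairing p (a + b) = pairing p a + pairing p b.
Proof. by rewrite /pairing linearD mulmxDr mxE. Qed.
Lemma pairingZ (p a : E) (t : R) : pairing p (t *: a) = t * pairing p a.
Proof. by rewrite /pairing linearZ /= -scalemxAr mxE. Qed.
Lemma pairingN (p a : E) : pairing p (- a) = - pairing p a.
Proof. by rewrite -scaleN1r pairingZ mulN1r. Qed.

Lemma pairing_aff (p a b y : E) (t : R) :
  pairing p ((1 - t) *: a + t *: b - y) = (1 - t) * pairing p (a - y) + t * pairing p (b - y).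
Proof. rewrite !pairingD !pairingN !pairingZ; ring. Qed.

Lemma dlin_aff (d : E -> R) (u a b y : E) (t : R) :
  'd d u ((1 - t) *: a + t *: b - y) = (1 - t) * 'd d u (a - y) + t * 'd d u (b - y).
Proof. rewrite !linearD !linearN !linearZ /= -![_ *: _]/(_ * _); ring. Qed.

Lemma conv_eq (a b : E) (t : R) : (1 - t) *: a + t *: b = a + t *: (b - a).
Proof. by rewrite scalerBr scalerBl scale1r addrAC addrA. Qed.

Lemma dir_ge (d : E -> R) u v B : differentiable d u ->
  (forall t : R, 0 < t <= 1 -> t * B <= d (u + t *: v) - d u) -> B <= 'd d u v.
Proof.
move=> Hd Hb; rewrite -deriveE //.
have := @diff_derivable _ _ _ _ _ v Hd; rewrite /derivable => /cvg_ex[l Hl].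
have Hl' := cvg_dnbhs_at_right Hl.
rewrite /derive (cvg_lim _ Hl) //.
apply: (cvgr_to_ge Hl').
near=> t.
have t0 : 0 < t by near: t; exact: nbhs_right_gt.
have t1 : t <= 1 by near: t; apply: nbhs_right_le; exact: ltr01.
rewrite /= (addrC (t *: v)) -[t^-1 *: _]/(t^-1 * _).
have := Hb t; rewrite t0 t1 => /(_ isT) h.
by rewrite -(ler_pM2l t0) mulrA mulfV ?gt_eqF // mul1r.
Unshelve. all: by end_near.
Qed.

Lemma bregman_ge0_gen (nrm : E -> R) (Q : set E) (d : E -> R) (D : E -> E -> R) u w :
  (forall x y, bregman d x y = d x - d y - D y (x - y)) ->
  (forall v B, (forall t : R, 0 < t <= 1 -> d (u + t *: v) - d u <= t * B) -> D u v <= B) ->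
  pc_strongly_convex1 nrm Q d -> Q u -> Q w ->
  0 <= bregman d w u.
Proof.
move=> Hbr Hle Hsc Qu Qw; rewrite Hbr.
suff : D u (w - u) <= d w - d u by lra.
apply: Hle => t /andP[t0 t1].
have := Hsc u w t Qu Qw; rewrite (ltW t0) t1 => /(_ isT).
rewrite conv_eq.
have : 0 <= t * (1 - t) / 2 * nrm (u - w) ^+ 2.
  by rewrite mulr_ge0 // ?sqr_ge0 // divr_ge0 // mulr_ge0 //; lra.
lra.
Qed.

Lemma bregman_ge0 (nrm : E -> R) (Q : set E) (d : E -> R) u w :
  pc_strongly_convex1 nrm Q d -> Q u -> Q w -> differentiable d u ->
  0 <= bregman d w u.
Proof.
move=> Hsc Qu Qw Hd.
apply: (@bregman_ge0_gen nrm Q d (fun u v => 'd d u v)) => //.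
move=> v B; exact: dir_le.
Qed.

Lemma three_point_gen (Q : set E) (d : E -> R) (D : E -> E -> R) (pr : E -> R)
    (y zk z' w : E) (G c : R) :
  (forall a b, pr (a + b) = pr a + pr b) -> (forall t a, pr (t *: a) = t * pr a) ->
  (forall u a b, D u (a + b) = D u a + D u b) -> (forall u t a, D u (t *: a) = t * D u a) ->
  (forall x y, bregman d x y = d x - d y - D y (x - y)) ->
  (forall v B, (forall t : R, 0 < t <= 1 -> t * B <= d (z' + t *: v) - d z') -> B <= D z' v) ->
  pc_convex_set Q -> Q z' -> Q w -> 0 < c ->
  (forall w, Q w -> G + pr (z' - y) + c * bregman d z' zk
                  <= G + pr (w - y) + c * bregman d w zk) ->
  G + pr (z' - y) + c * bregman d z' zk + c * bregman d w z'
    <= G + pr (w - y) + c * bregman d w zk.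
Proof.
move=> prD prZ DD DZ Hbr Hge HQ Qz Qw c0 Hmin.
have key : D zk (w - z') - pr (w - z') / c <= D z' (w - z').
  apply: Hge => t /andP[t0 t1].
  have Qt : Q ((1 - t) *: z' + t *: w) by apply: HQ => //; rewrite (ltW t0) t1.
  have e1' : (1 - t) *: z' + t *: w - zk = (z' - zk) + t *: (w - z').
    by rewrite conv_eq addrAC.
  have e2' : (1 - t) *: z' + t *: w - y = (z' - y) + t *: (w - z').
    by rewrite conv_eq addrAC.
  have := Hmin _ Qt; rewrite !Hbr e1' e2' (DD zk (z' - zk) (t *: (w - z'))) DZ.
  rewrite (prD (z' - y) (t *: (w - z'))) prZ conv_eq => h.
  rewrite -(ler_pM2l c0).
  have -> : c * (t * (D zk (w - z') - pr (w - z') / c))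
     = t * (c * D zk (w - z')) - t * pr (w - z').
    by field; rewrite gt_eqF.
  lra.
rewrite !Hbr.
have e : w - zk = (w - z') + (z' - zk) by rewrite addrA subrK.
have e3 : w - y = (w - z') + (z' - y) by rewrite addrA subrK.
rewrite e e3 (DD zk (w - z') (z' - zk)) (prD (w - z') (z' - y)).
have h2 : c * (D zk (w - z') - pr (w - z') / c) = c * D zk (w - z') - pr (w - z').
  by field; rewrite gt_eqF.
have h3 : c * (D zk (w - z') - pr (w - z') / c) <= c * D z' (w - z') by rewrite ler_pM2l.
rewrite h2 in h3.
lra.
Qed.

Lemma three_point (Q : set E) (d : E -> R) (p y zk z' w : E) (G c : R) :
  pc_convex_set Q -> Q z' -> Q w -> differentiable d z' -> 0 < c ->
  (forall w, Q w -> G + pairing p (z' - y) + c * bregman d z' zk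
                  <= G + pairing p (w - y) + c * bregman d w zk) ->
  G + pairing p (z' - y) + c * bregman d z' zk + c * bregman d w z'
    <= G + pairing p (w - y) + c * bregman d w zk.
Proof.
move=> HQ Qz Qw Hd c0 Hmin.
apply: (@three_point_gen Q d (fun u v => 'd d u v) (pairing p)) => //.
- exact: pairingD.
- by move=> t a; rewrite /pairing linearZ /= -scalemxAr mxE.
- by move=> u a b; rewrite linearD.
- by move=> u t a; rewrite linearZ.
- move=> v B; exact: dir_ge.
Qed.

End H.

Unset Implicit Arguments. Set Strict Implicit.

Theorem theorem3 (R : realType) (n : nat) (nrm : 'rV[R]_n -> R) (Q : set 'rV[R]_n)
  (f d : 'rV[R]_n -> R) (L gamma delta : R)
  (fdel : 'rV[R]_n -> R) (gdel : 'rV[R]_n -> 'rV[R]_n)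
  (x y z : nat -> 'rV[R]_n) (Ls : nat -> R) (xstar : 'rV[R]_n) :
  (* standing assumptions *)
  is_norm nrm ->
  closed Q -> pc_convex_set Q ->
  pc_convex_fun Q f ->
  (exists U : set 'rV[R]_n, [/\ open U, rint Q `<=` U &
       forall u, U u -> differentiable f u]) ->
  (forall u, Q u -> differentiable d u) ->
  (forall v, {within Q, continuous (fun u => 'd d u v)}) ->
  pc_strongly_convex1 nrm Q d ->
  (* parameters *)
  1 < gamma <= 2 -> 0 < delta ->
  (* relative smoothness *)
  (forall u w, rint Q u -> Q w ->
     f w <= f u + 'd f u (w - u) + L * bregman d w u) ->
  (* triangular scaling property *)
  (forall u w w' (t : R), Q u -> Q w -> Q w' -> 0 <= t <= 1 ->
     bregman d ((1 - t) *: u + t *: w) ((1 - t) *: u + t *: w')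
       <= t `^ gamma * bregman d w w') ->
  (* (delta, L)-oracle at every point of Q *)
  (forall u w, Q u -> Q w ->
     0 <= f w - (fdel u + pairing (gdel u) (w - u)) <= L * bregman d w u + delta) ->
  (* scheme AccBPGM-2 with theta_k = gamma / (k + gamma) *)
  let theta := fun k : nat => gamma / (k%:R + gamma) in
  let g := fun (w u : 'rV[R]_n) => fdel u + pairing (gdel u) (w - u) in
  rint Q (x 0%N) -> z 0%N = x 0%N ->
  (forall k : nat, y k = (1 - theta k) *: x k + theta k *: z k) ->
  (forall k : nat, Q (z k.+1) /\
     forall w, Q w ->
       g (z k.+1) (y k) + theta k `^ (gamma - 1) * Ls k.+1 * bregman d (z k.+1) (z k)
       <= g w (y k) + theta k `^ (gamma - 1) * Ls k.+1 * bregman d w (z k)) ->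
  (forall k : nat, x k.+1 = (1 - theta k) *: x k + theta k *: z k.+1) ->
  (* conditions on the constants L_{k+1} *)
  (forall k : nat, 0 < Ls k.+1) ->
  (forall k : nat, Ls k.+1 <= Ls k.+2) ->
  (forall k : nat, (theta k.+1 / theta k) `^ gamma <= Ls k.+1) ->
  (forall k : nat,
     f (x k.+1) <= g (x k.+1) (y k) + Ls k.+1 * bregman d (x k.+1) (y k) + delta) ->
  (forall k : nat, Ls k.+1 < 2 * L) ->
  (* x_* minimizer of f on Q *)
  Q xstar -> (forall w, Q w -> f xstar <= f w) ->
  forall N : nat, (1 <= N)%N ->
    f (x N) - f xstar <=
      2 * L * (gamma / (gamma + N%:R - 1)) `^ gamma * bregman d xstar (x 0%N)
      + (2 * (N%:R - 1) * L + 1) * delta.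
Proof.
move=> Hn Qc HQ Hfc Hdf_f Hdd Hcont Hsc /andP[g1 g2] d0 Hsm Hts Hor theta g
  Hx0 Hz0 Hy Hz Hx HL0 HLm HLth Hf' HL2 Qs Hmin N N1.
have g0 : 0 < gamma by lra.
have th0 : forall k, 0 < theta k.
  by move=> k; rewrite /theta divr_gt0 // ltr_wpDl.
have th1 : forall k, theta k <= 1.
  move=> k; rewrite /theta ler_pdivrMr ?mul1r ?ltr_wpDl // lerDr.
  exact: ler0n.
have th01 : forall k, 0 <= theta k <= 1 by move=> k; rewrite ltW ?th1.
have theta0 : theta 0%N = 1 by rewrite /theta add0r divff // gt_eqF.
have Qx0 : Q (x 0%N) by case: Hx0.
have QQ : forall k, Q (x k) /\ Q (z k).
  elim=> [|k [IHx IHz]]; first by rewrite Hz0.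
  have Qz' := (Hz k).1; split => //.
  by rewrite Hx; apply: HQ.
have Qxk : forall k, Q (x k) by move=> k; exact: (QQ k).1.
have Qzk : forall k, Q (z k) by move=> k; exact: (QQ k).2.
have Qyk : forall k, Q (y k) by move=> k; rewrite Hy; apply: HQ.
have Vnn : forall u w, Q u -> Q w -> 0 <= bregman d w u.
  by move=> u w Qu Qw; exact: (bregman_ge0 Hsc Qu Qw (Hdd _ Qu)).
have Htri : forall k, bregman d (x k.+1) (y k) <= theta k `^ gamma * bregman d (z k.+1) (z k).
  by move=> k; rewrite Hx Hy; apply: Hts.
have gaff : forall k, g (x k.+1) (y k) = (1 - theta k) * g (x k) (y k) + theta k * g (z k.+1) (y k).
  by move=> k; rewrite /g Hx pairing_aff; ring.
have glow : forall u w, Q u -> Q w -> g w u <= f w.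
  by move=> u w Qu Qw; have /andP[+ _] := Hor _ _ Qu Qw; rewrite subr_ge0.
have TP : forall k, g (z k.+1) (y k) + theta k `^ (gamma - 1) * Ls k.+1 * bregman d (z k.+1) (z k)
      + theta k `^ (gamma - 1) * Ls k.+1 * bregman d xstar (z k.+1)
      <= g xstar (y k) + theta k `^ (gamma - 1) * Ls k.+1 * bregman d xstar (z k).
  move=> k; have c0 : 0 < theta k `^ (gamma - 1) * Ls k.+1 by rewrite mulr_gt0 ?powR_gt0.
  exact: (three_point HQ (Qzk _) Qs (Hdd _ (Qzk _)) c0 (Hz k).2).
have V0 := Vnn _ _ (Qzk 0%N) Qs.
rewrite -Hz0.
clear Hz Hor Hts Hsm Hx Hy Hz0 Hx0.
clearbody g.
set B := bregman d in Vnn Htri TP V0 Hf' *.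
clearbody B.
pose fs := f xstar.
pose Ek k := f (x k) - fs.
pose Vk k := B xstar (z k).
pose w k := theta k `^ gamma * Ls k.+1.
have w0 : forall k, 0 < w k by move=> k; rewrite mulr_gt0 ?powR_gt0.
have Ek0 : forall k, 0 <= Ek k by move=> k; rewrite subr_ge0 Hmin.
have step : forall k, Ek k.+1 <= (1 - theta k) * Ek k + w k * (Vk k - Vk k.+1) + delta.
  move=> k.
  set t := theta k.
  have h1 := Hf' k.
  have h2 := Htri k.
  have h3 := gaff k.
  set c := t `^ (gamma - 1) * Ls k.+1.
  have h4 := TP k.
  rewrite -/t in h1 h3 h4; rewrite -/c in h4.
  have h5 : t * c = t `^ gamma * Ls k.+1.
    rewrite /c mulrA mulr_powRB1 //; exact: ltW (th0 k).
  have h6 : g (x k) (y k) <= f (x k) by exact: glow.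
  have h7 : g xstar (y k) <= f xstar by exact: glow.
  have h8 : (1 - t) * g (x k) (y k) <= (1 - t) * f (x k).
    by rewrite ler_wpM2l // subr_ge0 th1.
  have h9 : t * (g (z k.+1) (y k) + c * B (z k.+1) (z k) + c * B xstar (z k.+1))
        <= t * (g xstar (y k) + c * B xstar (z k)).
    by rewrite ler_wpM2l //; exact: ltW (th0 k).
  have h10 : t * g xstar (y k) <= t * f xstar by rewrite ler_wpM2l //; exact: ltW (th0 k).
  have h11 : Ls k.+1 * B (x k.+1) (y k) <= Ls k.+1 * (t `^ gamma * B (z k.+1) (z k)).
    by rewrite ler_wpM2l //; exact: ltW (HL0 k).
  have h12 : Ls k.+1 * (t `^ gamma * B (z k.+1) (z k)) = t * c * B (z k.+1) (z k).
    by rewrite h5; ring.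
  rewrite /Ek /Vk /w -h5 /fs.
  rewrite h3 in h1.
  lra.
have bernk : forall m, (1 - theta m.+1) * w m <= w m.+1.
  move=> m.
  set r := (m%:R + gamma) / (m.+1%:R + gamma).
  have mg0 : 0 < m%:R + gamma by rewrite ltr_wpDl.
  have mg1 : 0 < m.+1%:R + gamma by rewrite ltr_wpDl.
  have mgA : 0 < m%:R + 1 + gamma by rewrite natr1.
  have mgB : 0 < 1 + m%:R + gamma by rewrite nat1r.
  have r0 : 0 <= r by rewrite divr_ge0 // ltW.
  have r1 : r <= 1 by rewrite ler_pdivrMr // mul1r -natr1 lerD2r; lra.
  have eth : theta m.+1 = theta m * r.
    rewrite /theta /r; field; by rewrite !gt_eqF.
  have epow : theta m.+1 `^ gamma = theta m `^ gamma * r `^ gamma.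
    by rewrite eth powRM // ltW.
  have hb := bern r0 g1.
  have e1r : 1 - gamma * (1 - r) = 1 - theta m.+1.
    rewrite /r /theta -natr1; field; by rewrite !gt_eqF.
  rewrite e1r in hb.
  have b0 : 0 <= theta m `^ gamma by exact: powR_ge0.
  have L1 : 0 <= Ls m.+1 by exact: ltW.
  have q1 : (1 - theta m.+1) * (theta m `^ gamma * Ls m.+1)
            <= r `^ gamma * (theta m `^ gamma * Ls m.+1).
    by rewrite ler_wpM2r // mulr_ge0.
  have q2 : r `^ gamma * (theta m `^ gamma * Ls m.+1)
            <= r `^ gamma * (theta m `^ gamma * Ls m.+2).
    by rewrite ler_wpM2l ?powR_ge0 // ler_wpM2l.
  rewrite /w epow.
  have -> : theta m `^ gamma * r `^ gamma * Ls m.+2 = r `^ gamma * (theta m `^ gamma * Ls m.+2) by ring.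
  exact: le_trans q1 q2.
pose S m := \sum_(i < m) (w i)^-1.
have claim : forall m, Ek m.+1 <= w m * (Vk 0%N - Vk m.+1 + delta * S m.+1).
  elim=> [|m IH].
    have := step 0%N; rewrite theta0 subrr mul0r add0r /S big_ord1.
    have -> : w 0%N * (Vk 0%N - Vk 1%N + delta * (w 0%N)^-1)
       = w 0%N * (Vk 0%N - Vk 1%N) + delta by field; rewrite gt_eqF.
    by [].
  have X0 : 0 <= Vk 0%N - Vk m.+1 + delta * S m.+1.
    have := le_trans (Ek0 m.+1) IH.
    by rewrite pmulr_rge0.
  have hs := step m.+1.
  have hb := bernk m.
  have t1 : 0 <= 1 - theta m.+1 by rewrite subr_ge0.
  have q1 : (1 - theta m.+1) * Ek m.+1
           <= (1 - theta m.+1) * (w m * (Vk 0%N - Vk m.+1 + delta * S m.+1)).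
    by rewrite ler_wpM2l.
  have q2 : (1 - theta m.+1) * (w m * (Vk 0%N - Vk m.+1 + delta * S m.+1))
           <= w m.+1 * (Vk 0%N - Vk m.+1 + delta * S m.+1).
    by rewrite mulrA ler_wpM2r.
  have -> : S m.+2 = S m.+1 + (w m.+1)^-1 by rewrite /S big_ord_recr.
  have -> : w m.+1 * (Vk 0%N - Vk m.+2 + delta * (S m.+1 + (w m.+1)^-1))
     = w m.+1 * (Vk 0%N - Vk m.+1 + delta * S m.+1) + w m.+1 * (Vk m.+1 - Vk m.+2) + delta.
    by field; rewrite gt_eqF.
  lra.
have L0 : 0 < L by have := HL0 0%N; have := HL2 0%N; lra.
case: N N1 => [//|m] _.
have hc := claim m.
have VN := Vnn _ _ (Qzk m.+1) Qs.
have ethm : gamma / (gamma + m.+1%:R - 1) = theta m.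
  by rewrite /theta -natr1; congr (_ / _); ring.
have eN : m.+1%:R - 1 = m%:R :> R by rewrite -natr1; ring.
rewrite ethm eN.
have h1 : w m * Vk 0%N <= 2 * L * theta m `^ gamma * Vk 0%N.
  rewrite /w ler_wpM2r //; rewrite mulrC ler_wpM2r ?powR_ge0 //; exact: ltW (HL2 m).
have hwS : w m * S m.+1 <= 2 * m%:R * L + 1.
  rewrite /S mulr_sumr big_ord_recr /= mulfV ?gt_eqF // lerD2r.
  have -> : 2 * m%:R * L = \sum_(i < m) (2 * L).
    by rewrite sumr_const card_ord -mulr_natl; ring.
  apply: ler_sum => i _.
  rewrite ler_pdivrMr //.
  have ti0 : 0 <= theta i := ltW (th0 i).
  have ti1 : 0 <= theta i.+1 := ltW (th0 i.+1).
  have tm0 : 0 <= theta m := ltW (th0 m).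
  have Lm0 : 0 <= Ls m.+1 := ltW (HL0 m).
  have Li0 : 0 <= Ls i.+1 := ltW (HL0 i).
  have Lm2 : Ls m.+1 <= 2 * L := ltW (HL2 m).
  have im : (i.+1 <= m)%N := ltn_ord i.
  have tle : theta m <= theta i.+1.
    rewrite /theta ler_pM2l // lef_pV2 ?posrE ?ltr_wpDl // lerD2r ler_nat //.
  have tpow : theta m `^ gamma <= theta i.+1 `^ gamma.
    by apply: (ge0_ler_powR (ltW g0)); rewrite ?nnegrE.
  have e2 : theta i.+1 `^ gamma = (theta i.+1 / theta i) `^ gamma * theta i `^ gamma.
    have e2' : theta i.+1 / theta i * theta i = theta i.+1.
      by rewrite -mulrA mulVf ?mulr1 // gt_eqF.
    rewrite -powRM; first by rewrite e2'.
    - exact: divr_ge0.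
    - exact: ti0.
  have h3 : (theta i.+1 / theta i) `^ gamma * theta i `^ gamma <= Ls i.+1 * theta i `^ gamma.
    by rewrite ler_wpM2r ?powR_ge0.
  have h4 : w m <= Ls i.+1 * theta i `^ gamma * Ls m.+1.
    by rewrite /w ler_wpM2r // (le_trans tpow) // e2.
  apply: (le_trans h4); rewrite /w.
  have -> : Ls i.+1 * theta i `^ gamma * Ls m.+1 = Ls m.+1 * (theta i `^ gamma * Ls i.+1) by ring.
  by rewrite ler_wpM2r // mulr_ge0 // powR_ge0.
have h5 : w m * (delta * S m.+1) <= (2 * m%:R * L + 1) * delta.
  by rewrite mulrCA mulrC ler_wpM2r //; exact: ltW d0.
have h6 : 0 <= w m * Vk m.+1 by rewrite mulr_ge0 //; exact: ltW (w0 m).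
rewrite /Ek /fs /Vk in hc; rewrite /Vk in h1 h6.
lra.
Qed.
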